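(* Let $n\ge 2$, $c=(c_1,\dots,c_n)^T$ with $c_k>0$ for all $k$, and fix $i\in\{1,\dots,n\}$. Let $\mathcal{E_D}=\{x\in\mathbb{R}^n:\sum_{k=1}^n (x_k-c_k)^2/c_k^2\le 1\}$ be the Dikin ellipsoid and $\mathcal{H}_i=\{x\in\mathbb{R}^n: x_i=c_i\}$. Define the symmetric matrix $$Q_i=D+\frac{n-3}{c_i^2}E_{ii}+\sum_{j=1,j\neq i}^n\frac{-1}{c_ic_j}(E_{ij}+E_{ji}),\qquad D=\mathrm{diag}\{c_1^{-2},\dots,c_n^{-2}\},$$ i.e. $(Q_i)_{ii}=\frac{n-2}{c_i^2}$, $(Q_i)_{jj}=\frac{1}{c_j^2}$ and $(Q_i)_{ij}=(Q_i)_{ji}=-\frac{1}{c_ic_j}$ for $j\neq i$, all other entries $0$. Then the Lorenz cone with vertex at the origin and base $\mathcal{H}_i\cap\mathcal{E_D}$, together with its reflection through the origin, is represented by $Q_i$: $$\{x\in\mathbb{R}^n: x^TQ_ix\le 0\}=\{\lambda y:\ \lambda\in\mathbb{R},\ y\in\mathcal{H}_i\cap\mathcal{E_D}\}.$$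
   Context: $E_{ij}$ denotes the $n\times n$ matrix whose $(i,j)$ entry is $1$ and all other entries are $0$. *)

(* Defs.v *)
From mathcomp Require Import all_boot all_order all_algebra.
From mathcomp Require Import reals.
Set Implicit Arguments. Unset Strict Implicit. Unset Printing Implicit Defensive.
Import Order.TTheory GRing.Theory Num.Theory.
Local Open Scope ring_scope.

(* Vectors of R^n are column vectors 'cV[R]_n; indices 1..n are 'I_n (0-based). *)

Definition dikin {R : realType} {n : nat} (c : 'cV[R]_n) (x : 'cV[R]_n) : Prop :=
  \sum_(k < n) (x k 0 - c k 0) ^+ 2 / (c k 0) ^+ 2 <= 1.

Definition hyperH {R : realType} {n : nat} (c : 'cV[R]_n) (i : 'I_n) (x : 'cV[R]_n) : Prop :=
  x i 0 = c i 0.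

Definition Dmat {R : realType} {n : nat} (c : 'cV[R]_n) : 'M[R]_n :=
  diag_mx (\row_k ((c k 0) ^+ 2)^-1).

(* Q_i = D + (n-3)/c_i^2 E_ii + sum_{j <> i} -1/(c_i c_j) (E_ij + E_ji);
   E_ij is delta_mx i j.  (n-3) is taken in R (so it may be negative). *)
Definition Qmat {R : realType} {n : nat} (c : 'cV[R]_n) (i : 'I_n) : 'M[R]_n :=
  Dmat c + ((n%:R - 3) / (c i 0) ^+ 2) *: delta_mx i i
  + \sum_(j < n | j != i) (- 1 / (c i 0 * c j 0)) *: (delta_mx i j + delta_mx j i).

Definition qform {R : realType} {n : nat} (Q : 'M[R]_n) (x : 'cV[R]_n) : R :=
  (x^T *m Q *m x) 0 0.

(* Main.v *)
Require Import Defs.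
From mathcomp Require Import all_boot all_order all_algebra.
From mathcomp Require Import reals.
From mathcomp Require Import ring lra.
Import Order.TTheory GRing.Theory Num.Theory.
Local Open Scope ring_scope.


Section S.
Variables (R : realType) (n : nat).
Implicit Types (Q : 'M[R]_n) (x : 'cV[R]_n).

Lemma qformE Q x : qform Q x = \sum_a \sum_b x a 0 * Q a b * x b 0.
Proof.
rewrite /qform mxE; under eq_bigr => b _ do rewrite mxE big_distrl /=.
rewrite exchange_big /=; apply: eq_bigr => a _; apply: eq_bigr => b _.
by rewrite mxE.
Qed.

Lemma qformD Q1 Q2 x : qform (Q1 + Q2) x = qform Q1 x + qform Q2 x.
Proof. by rewrite /qform mulmxDr mulmxDl mxE. Qed.

Lemma qform0 x : qform 0 x = 0.
Proof. by rewrite /qform mulmx0 mul0mx mxE. Qed.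

Lemma qformZ k Q x : qform (k *: Q) x = k * qform Q x.
Proof. by rewrite /qform -scalemxAr -scalemxAl mxE. Qed.

Lemma qform_sum (P : pred 'I_n) (F : 'I_n -> 'M[R]_n) x :
  qform (\sum_(j | P j) F j) x = \sum_(j | P j) qform (F j) x.
Proof. by elim/big_rec2: _ => [|j A B _ <-]; rewrite ?qform0 ?qformD. Qed.

Lemma qform_delta a b x : qform (delta_mx a b) x = x a 0 * x b 0.
Proof.
rewrite qformE (bigD1 a) //= [X in _ + X]big1 ?addr0; last first.
  move=> a' ha; apply: big1 => b' _; rewrite mxE (negbTE ha) /=; ring.
rewrite (bigD1 b) //= [X in _ + X]big1 ?addr0; last first.
  move=> b' hb; rewrite mxE eqxx (negbTE hb) /=; ring.
rewrite mxE !eqxx /=; ring.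
Qed.

Lemma qform_diag (d : 'rV[R]_n) x : qform (diag_mx d) x = \sum_k d 0 k * x k 0 ^+ 2.
Proof.
rewrite qformE; apply: eq_bigr => a _.
rewrite (bigD1 a) //= [X in _ + X]big1 ?addr0; last first.
  move=> b hb; rewrite mxE eq_sym (negbTE hb) mulr0n; ring.
rewrite mxE eqxx mulr1n; ring.
Qed.
End S.

Lemma sum_constC (R : realType) n (i : 'I_n) (a : R) :
  \sum_(j < n | j != i) a = n%:R * a - a.
Proof.
have h : \sum_(j < n) a = a + \sum_(j < n | j != i) a by rewrite (bigD1 i).
move: h; rewrite sumr_const card_ord => h; rewrite mulr_natl h; ring.
Qed.

Lemma qform_Q (R : realType) n (c : 'cV[R]_n) (hc : forall k : 'I_n, c k 0 != 0)
  (i : 'I_n) x :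
  qform (Qmat c i) x = \sum_(j < n | j != i) (x j 0 / c j 0 - x i 0 / c i 0) ^+ 2
                       - (x i 0 / c i 0) ^+ 2.
Proof.
rewrite /Qmat /Dmat !qformD qformZ qform_diag qform_delta qform_sum.
under eq_bigr => j _ do rewrite mxE.
have hsq j : (x j 0 / c j 0 - x i 0 / c i 0) ^+ 2 = ((c j 0) ^+ 2)^-1 * x j 0 ^+ 2 +
       (- 1 / (c i 0 * c j 0)) * (x i 0 * x j 0 + x j 0 * x i 0) + (x i 0 / c i 0)^+2.
  by field; rewrite !hc.
under [X in _ = X - _]eq_bigr => j _ do rewrite hsq.
rewrite !big_split /= sum_constC.
under [X in _ + _ + X = _]eq_bigr => j _ do rewrite qformZ qformD !qform_delta.
rewrite (bigD1 i) //=.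
have := hc i; set ci := c i 0 => hci.
field; exact: hci.
Qed.

Theorem mainTheorem3 (R : realType) (n : nat) (hn : (2 <= n)%N)
  (c : 'cV[R]_n) (hc : forall k : 'I_n, 0 < c k 0) (i : 'I_n) :
  forall x : 'cV[R]_n,
    qform (Qmat c i) x <= 0 <->
    exists (lam : R) (y : 'cV[R]_n), hyperH c i y /\ dikin c y /\ x = lam *: y.
Proof.
have hc0 k : c k 0 != 0 by rewrite gt_eqF.
move=> x; rewrite qform_Q //; split.
- move=> hq.
  have [xi0|xi0] := eqVneq (x i 0) 0.
  + exists 0, c; split; first by [].
    split; first by rewrite /dikin big1 // => k _; rewrite subrr expr0n /= mul0r.
    rewrite scale0r.
    move: hq; rewrite xi0 mul0r expr0n /= subr0.
    under eq_bigr => j _ do rewrite subr0.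
    move=> hq.
    have hs : \sum_(j < n | j != i) (x j 0 / c j 0) ^+ 2 = 0.
      by apply/eqP; rewrite eq_le hq sumr_ge0 // => j _; rewrite sqr_ge0.
    have := (psumr_eq0P (fun j _ => sqr_ge0 (x j 0 / c j 0)) hs) => hz.
    apply/matrixP => a b; rewrite (ord1 b) mxE.
    have [->|hai] := eqVneq a i; first by [].
    have := hz a hai; move/eqP; rewrite sqrf_eq0 mulf_eq0 invr_eq0 (negbTE (hc0 a)) orbF.
    by move/eqP.
  + set lam := x i 0 / c i 0.
    have hl : lam != 0 by rewrite mulf_neq0 // invr_eq0.
    exists lam, (lam^-1 *: x); split.
      by rewrite /hyperH mxE /lam; field; rewrite xi0 hc0.
    split; last by rewrite scalerA mulfV // scale1r.
    rewrite /dikin (bigD1 i) //= mxE.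
    rewrite (_ : lam^-1 * x i 0 - c i 0 = 0); last by rewrite /lam; field; rewrite xi0 hc0.
    rewrite expr0n /= mul0r add0r.
    have e j : (lam^-1 *: x) j 0 - c j 0 = lam^-1 * c j 0 * (x j 0 / c j 0 - lam).
      by rewrite mxE; field; rewrite hl hc0.
    have e2 j : ((lam^-1 *: x) j 0 - c j 0) ^+ 2 / c j 0 ^+ 2 = lam^-1 ^+ 2 * (x j 0 / c j 0 - lam) ^+ 2.
      by rewrite e; field; rewrite hl hc0.
    under eq_bigr => j _ do rewrite e2.
    rewrite -mulr_sumr exprVn.
    have hl2 : 0 < lam ^+ 2 by rewrite exprn_even_gt0.
    rewrite mulrC ler_pdivrMr // mul1r; move: hq; rewrite -/lam; lra.
- move=> [lam [y [hy [hd ->]]]].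
  rewrite /hyperH in hy.
  move: hd; rewrite /dikin (bigD1 i) //= hy subrr expr0n /= mul0r add0r => hd.
  have e j : (lam *: y) j 0 / c j 0 - (lam *: y) i 0 / c i 0 =
      lam * ((y j 0 - c j 0) / c j 0).
    by rewrite !mxE hy; field; rewrite !hc0.
  under eq_bigr => j _ do rewrite e exprMn expr_div_n.

  rewrite -mulr_sumr !mxE hy mulfK //.
  have := sqr_ge0 lam; nra.
Qed.
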